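(* The full subcategory $\mathbf{T_D Top_S}$ of $\mathbf{Top_S}$ consisting of $T_D$-spaces is equivalent to the opposite of the full subcategory $\mathbf{STDMT_P}$ of $\mathbf{MT_P}$ consisting of spatial $T_D$-algebras.
   Context: A space is $T_D$ if every point $x$ is locally closed ($\{x\}$ is closed in some open neighborhood of $x$). Soberification: $sX=\mathrm{pt}\,\Omega X$ (completely prime filters of the frame of opens), $\lambda_X(x)=\{U\text{ open}: x\in U\}$. A sober map $f:X\rightsquigarrow Y$ is a continuous map $X\to sY$; composition $g\bullet f=\lambda_{sZ}^{-1}\circ sg\circ f$, identities $\lambda_X$; this is $\mathbf{Top_S}$. An MT-algebra is a complete boolean algebra $M$ with $\square$ satisfying $\square1=1$, $\square(a\wedge b)=\square a\wedge\square b$, $\square a\le a$, $\square a\le\square\square a$; $\Diamond=\neg\square\neg$; open: $\square a=a$; locally closed: $a=\square b\wedge\Diamond c$; $M$ is $T_D$ if every element is a join of locally closed elements; $M$ is spatial if $a\mapsto\{x\text{ atom}: x\le a\}$ is injective. A proximity morphism $f:M\to N$ is a map with (P1) $f|_{\mathcal O M}:\mathcal O M\to\mathcal O N$ a frame morphism; (P2) $f(a\wedge b)=f(a)\wedge f(b)$; (P3) $f(\bigvee S)=\bigvee f[S]$ for finite $S\subseteq\mathcal{LC}M$; (P4) $f(a)=\bigvee\{f(x):x\in\mathcal{LC}M,x\le a\}$. $\mathbf{MT_P}$: MT-algebras with proximity morphisms, composition $(g\star f)(a)=\bigvee\{g(f(x)):x\in\mathcal{LC}M_1,x\le a\}$,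 identities $1_M(a)=\bigvee\{x\in\mathcal{LC}M:x\le a\}$. *)

(* Defs.v *)
From Stdlib Require Import List.




(* Morphisms are "raw" data together with a validity predicate; only   *)
(* valid raw morphisms are morphisms of the category.                  *)

Record CatData := {
  Ob : Type;
  Hm : Ob -> Ob -> Type;
  valid : forall a b, Hm a b -> Prop;
  cmp : forall a b c, Hm b c -> Hm a b -> Hm a c;   (* cmp g f = g after f *)
  idm : forall a, Hm a a
}.

Arguments valid {_ _ _} _.
Arguments cmp {_ _ _ _} _ _.
Arguments idm {_} _.

Definition opCat (C : CatData) : CatData := {|
  Ob := Ob C;
  Hm := fun a b => @Hm C b a;
  valid := fun a b f => @valid C b a f;
  cmp := fun x y z g f => @cmp C z y x f g;
  idm := fun a => @idm C a
|}.

Record Functor (C D : CatData) := {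
  Fo : Ob C -> Ob D;
  Fh : forall a b, Hm C a b -> Hm D (Fo a) (Fo b);
  F_valid : forall a b (f : Hm C a b), valid f -> valid (Fh a b f);
  F_id : forall a, Fh a a (idm a) = idm (Fo a);
  F_comp : forall a b c (f : Hm C a b) (g : Hm C b c),
      valid f -> valid g -> Fh a c (cmp g f) = cmp (Fh b c g) (Fh a b f)
}.

Arguments Fo {C D}.
Arguments Fh {C D} _ {a b} _.

Set Implicit Arguments.
Unset Strict Implicit.

Definition natiso (C D : CatData)
  (Fo1 : Ob C -> Ob D) (Fh1 : forall a b, Hm C a b -> Hm D (Fo1 a) (Fo1 b))
  (Fo2 : Ob C -> Ob D) (Fh2 : forall a b, Hm C a b -> Hm D (Fo2 a) (Fo2 b)) : Prop :=
  exists (al : forall a, Hm D (Fo1 a) (Fo2 a)) (be : forall a, Hm D (Fo2 a) (Fo1 a)),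
    (forall a, valid (al a) /\ valid (be a) /\
               cmp (be a) (al a) = idm (Fo1 a) /\ cmp (al a) (be a) = idm (Fo2 a)) /\
    (forall a b (f : Hm C a b), valid f ->
               cmp (Fh2 a b f) (al a) = cmp (al b) (Fh1 a b f)).

Arguments natiso {C D} _ _ _ _.

Definition CatEquivalent (C D : CatData) : Prop :=
  exists (F : Functor C D) (G : Functor D C),
    natiso (fun a => Fo G (Fo F a)) (fun a b f => Fh G (Fh F f))
           (fun a => a) (fun a b f => f) /\
    natiso (fun a => Fo F (Fo G a)) (fun a b f => Fh F (Fh G f))
           (fun a => a) (fun a b f => f).

Record Space := {
  pts :> Type;
  isOpen : (pts -> Prop) -> Prop;
  open_full : isOpen (fun _ => True);
  open_meet : forall U V, isOpen U -> isOpen V -> isOpen (fun x => U x /\ V x);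
  open_union : forall F : (pts -> Prop) -> Prop,
      (forall U, F U -> isOpen U) -> isOpen (fun x => exists U, F U /\ U x)
}.

Arguments isOpen {s}.

(* x is locally closed: {x} is closed in some open neighbourhood U of x,
   i.e. U \ {x} is open in the subspace U. *)
Definition TD_space (X : Space) : Prop :=
  forall x : X, exists U, isOpen U /\ U x /\
    exists V, isOpen V /\ forall y, U y -> (V y <-> y <> x).

(* completely prime filters of the frame of opens of X (points of sX) *)
Definition cpfilter (X : Space) (P : (X -> Prop) -> Prop) : Prop :=
  (forall U, P U -> isOpen U) /\
  P (fun _ => True) /\
  (forall U V, isOpen U -> isOpen V -> P U -> (forall x, U x -> V x) -> P V) /\
  (forall U V, P U -> P V -> P (fun x => U x /\ V x)) /\
  (forall F : (X -> Prop) -> Prop, (forall U, F U -> isOpen U) ->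
      P (fun x => exists U, F U /\ U x) -> exists U, F U /\ P U).

(* raw sober map X ~> Y : a function X -> sY *)
Definition rawSober (X Y : Space) := X -> ((Y -> Prop) -> Prop).

(* the open sets of sY are exactly the sets {P | P V}, V open in Y; so a
   map f : X -> sY is continuous iff {x | f x V} is open for V open. *)
Definition soberMap (X Y : Space) (f : rawSober X Y) : Prop :=
  (forall x, cpfilter (f x)) /\
  (forall V, isOpen V -> isOpen (fun x => f x V)).

Definition lambdaS (X : Space) : rawSober X X := fun x U => isOpen U /\ U x.

(* g . f = lambda_{sZ}^{-1} o sg o f, unfolded:
   (g . f)(x) = { W | f x (g^{-1}(phi W)) } with phi W = {Q | Q W} *)
Definition soberComp (X Y Z : Space) (g : rawSober Y Z) (f : rawSober X Y)
  : rawSober X Z := fun x W => f x (fun y => g y W).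

Definition TDTopS : CatData := {|
  Ob := { X : Space | TD_space X };
  Hm := fun X Y => rawSober (proj1_sig X) (proj1_sig Y);
  valid := fun X Y f => @soberMap (proj1_sig X) (proj1_sig Y) f;
  cmp := fun X Y Z g f => @soberComp (proj1_sig X) (proj1_sig Y) (proj1_sig Z) g f;
  idm := fun X => @lambdaS (proj1_sig X)
|}.

Record MTAlg := {
  mcar :> Type;
  mle : mcar -> mcar -> Prop;
  mle_refl : forall a, mle a a;
  mle_trans : forall a b c, mle a b -> mle b c -> mle a c;
  mle_anti : forall a b, mle a b -> mle b a -> a = b;
  msup : (mcar -> Prop) -> mcar;
  msup_ub : forall S a, S a -> mle a (msup S);
  msup_least : forall S b, (forall a, S a -> mle a b) -> mle (msup S) b;
  mmeet : mcar -> mcar -> mcar;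
  mmeet_l : forall a b, mle (mmeet a b) a;
  mmeet_r : forall a b, mle (mmeet a b) b;
  mmeet_glb : forall a b c, mle c a -> mle c b -> mle c (mmeet a b);
  mdistr : forall a b c,
      mmeet a (msup (fun x => x = b \/ x = c)) =
      msup (fun x => x = mmeet a b \/ x = mmeet a c);
  mneg : mcar -> mcar;
  mneg_meet : forall a, mmeet a (mneg a) = msup (fun _ => False);
  mneg_join : forall a, msup (fun x => x = a \/ x = mneg a) = msup (fun _ => True);
  mbox : mcar -> mcar;
  mbox_top : mbox (msup (fun _ => True)) = msup (fun _ => True);
  mbox_meet : forall a b, mbox (mmeet a b) = mmeet (mbox a) (mbox b);
  mbox_defl : forall a, mle (mbox a) a;
  mbox_4 : forall a, mle (mbox a) (mbox (mbox a))
}.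

Arguments mle {m}.
Arguments msup {m}.
Arguments mmeet {m}.
Arguments mneg {m}.
Arguments mbox {m}.

Definition mtop (M : MTAlg) : M := msup (fun _ => True).
Definition mbot (M : MTAlg) : M := msup (fun _ => False).
Definition mdia (M : MTAlg) (a : M) : M := mneg (mbox (mneg a)).
Definition openM (M : MTAlg) (a : M) : Prop := mbox a = a.
Definition locClosed (M : MTAlg) (a : M) : Prop :=
  exists b c, a = mmeet (mbox b) (mdia c).

Definition TD_alg (M : MTAlg) : Prop :=
  forall a : M, exists S : M -> Prop, (forall x, S x -> locClosed x) /\ a = msup S.

Definition atom (M : MTAlg) (x : M) : Prop :=
  x <> mbot M /\ forall y, mle y x -> y = mbot M \/ y = x.

Definition spatial (M : MTAlg) : Prop :=
  forall a b : M,
    (fun x => atom x /\ mle x a) = (fun x => atom x /\ mle x b) -> a = b.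

Definition proximity (M N : MTAlg) (f : M -> N) : Prop :=
  ((forall a, openM a -> openM (f a)) /\
   f (mtop M) = mtop N /\
   (forall a b, openM a -> openM b -> f (mmeet a b) = mmeet (f a) (f b)) /\
   (forall S : M -> Prop, (forall a, S a -> openM a) ->
       f (msup S) = msup (fun y => exists a, S a /\ y = f a))) /\
  (forall a b, f (mmeet a b) = mmeet (f a) (f b)) /\
  (forall l : list M, (forall x, In x l -> locClosed x) ->
       f (msup (fun x => In x l)) = msup (fun y => exists x, In x l /\ y = f x)) /\
  (forall a, f a = msup (fun y => exists x, locClosed x /\ mle x a /\ y = f x)).

Definition proxComp (M1 M2 M3 : MTAlg) (g : M2 -> M3) (f : M1 -> M2) : M1 -> M3 :=
  fun a => msup (fun z => exists x, locClosed x /\ mle x a /\ z = g (f x)).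

Definition proxId (M : MTAlg) : M -> M :=
  fun a => msup (fun x => locClosed x /\ mle x a).

Definition STDMTP : CatData := {|
  Ob := { M : MTAlg | spatial M /\ TD_alg M };
  Hm := fun M N => mcar (proj1_sig M) -> mcar (proj1_sig N);
  valid := fun M N f => proximity f;
  cmp := fun M1 M2 M3 g f => proxComp g f;
  idm := fun M => proxId (M := proj1_sig M)
|}.

(* Main.v *)
Require Import Defs.
From Stdlib Require Import List Classical FunctionalExtensionality PropExtensionality ProofIrrelevance.
Set Implicit Arguments.
Unset Strict Implicit.
Ltac pext := apply propositional_extensionality.
Ltac fext x := apply functional_extensionality; intro x.



Lemma le_antiE (M : MTAlg) (a b : M) : mle a b -> mle b a -> a = b.
Proof. apply mle_anti. Qed.

Lemma bot_le (M : MTAlg) (a : M) : mle (mbot M) a.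
Proof. apply msup_least. intros _ []. Qed.

Lemma le_top (M : MTAlg) (a : M) : mle a (mtop M).
Proof. apply msup_ub. exact I. Qed.

Lemma meetC (M : MTAlg) (a b : M) : mmeet a b = mmeet b a.
Proof. apply mle_anti; apply mmeet_glb; auto using mmeet_l, mmeet_r. Qed.

Lemma meet_top (M : MTAlg) (a : M) : mmeet a (mtop M) = a.
Proof. apply mle_anti. apply mmeet_l. apply mmeet_glb. apply mle_refl. apply le_top. Qed.

Definition jn (M : MTAlg) (a b : M) : M := msup (fun x => x = a \/ x = b).

Lemma jn_l (M : MTAlg) (a b : M) : mle a (jn a b).
Proof. apply msup_ub. auto. Qed.
Lemma jn_r (M : MTAlg) (a b : M) : mle b (jn a b).
Proof. apply msup_ub. auto. Qed.
Lemma jn_least (M : MTAlg) (a b c : M) : mle a c -> mle b c -> mle (jn a b) c.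
Proof. intros. apply msup_least. intros x [->| ->]; auto. Qed.

Lemma meet_mono (M : MTAlg) (a b c d : M) : mle a c -> mle b d -> mle (mmeet a b) (mmeet c d).
Proof. intros. apply mmeet_glb; eapply mle_trans; [apply mmeet_l|auto|apply mmeet_r|auto]. Qed.

Lemma inf_distr (M : MTAlg) (a : M) (S : M -> Prop) :
  mle (mmeet a (msup S)) (msup (fun y => exists s, S s /\ y = mmeet a s)).
Proof.
  set (t := msup (fun y => exists s, S s /\ y = mmeet a s)).
  assert (H1 : mle (msup S) (jn t (mneg a))).
  { apply msup_least. intros s Hs.
    assert (E : s = jn (mmeet s a) (mmeet s (mneg a))).
    { unfold jn. rewrite <- mdistr. change (msup (fun x => x = a \/ x = mneg a)) with (jn a (mneg a)).
      unfold jn. rewrite mneg_join. symmetry. apply meet_top. }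
    rewrite E. apply jn_least.
    - eapply mle_trans; [|apply jn_l]. apply msup_ub. exists s. split; auto. apply meetC.
    - eapply mle_trans; [|apply jn_r]. apply mmeet_r. }
  eapply mle_trans. apply meet_mono. apply mle_refl. exact H1.
  unfold jn. rewrite mdistr. apply msup_least. intros x [->| ->].
  apply mmeet_r. rewrite mneg_meet. apply bot_le.
Qed.

Lemma atom_not_bot (M : MTAlg) (p : M) : atom p -> ~ mle p (mbot M).
Proof. intros [H _] Hle. apply H. apply mle_anti; auto using bot_le. Qed.

Lemma atom_le_eq (M : MTAlg) (p q : M) : atom p -> atom q -> mle p q -> p = q.
Proof. intros Hp [_ Hq] H. destruct (Hq p H) as [E|E]; auto. subst. destruct Hp; contradiction. Qed.

Lemma atom_sup (M : MTAlg) (p : M) (S : M -> Prop) : atom p -> mle p (msup S) -> exists s, S s /\ mle p s.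
Proof.
  intros Hp H. apply NNPP. intro Hn.
  apply (atom_not_bot Hp).
  assert (E : p = mmeet p (msup S)).
  { apply mle_anti. apply mmeet_glb; auto using mle_refl. apply mmeet_l. }
  rewrite E. eapply mle_trans. apply inf_distr. apply msup_least.
  intros y [s [Hs ->]]. destruct Hp as [_ Hp]. destruct (Hp _ (mmeet_l p s)) as [E'|E'].
  rewrite E'. apply mle_refl. exfalso. apply Hn. exists s. split; auto. rewrite <- E'. apply mmeet_r.
Qed.

Lemma atom_compl (M : MTAlg) (p a : M) : atom p -> (mle p (mneg a) <-> ~ mle p a).
Proof.
  intros Hp. split.
  - intros H1 H2. apply (atom_not_bot Hp). unfold mbot. rewrite <- (mneg_meet a). apply mmeet_glb; auto.
  - intros H. destruct Hp as [Hnb Hp]. destruct (Hp _ (mmeet_l p a)) as [E|E].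
    + assert (Ep : p = jn (mmeet p a) (mmeet p (mneg a))).
      { unfold jn. rewrite <- mdistr. change (msup (fun x => x = a \/ x = mneg a)) with (jn a (mneg a)).
        unfold jn. rewrite mneg_join. symmetry. apply meet_top. }
      rewrite Ep, E. apply jn_least. apply bot_le. apply mmeet_r.
    + exfalso. apply H. rewrite <- E. apply mmeet_r.
Qed.

Lemma box_mono (M : MTAlg) (a b : M) : mle a b -> mle (mbox a) (mbox b).
Proof.
  intros H. assert (E : a = mmeet a b) by (apply mle_anti; [apply mmeet_glb; auto using mle_refl | apply mmeet_l]).
  rewrite E, mbox_meet. apply mmeet_r.
Qed.

Lemma box_idem (M : MTAlg) (a : M) : mbox (mbox a) = mbox a.
Proof. apply mle_anti. apply mbox_defl. apply mbox_4. Qed.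

Lemma open_top (M : MTAlg) : openM (mtop M).
Proof. apply mbox_top. Qed.

Lemma open_meet_M (M : MTAlg) (a b : M) : openM a -> openM b -> openM (mmeet a b).
Proof. unfold openM. intros Ha Hb. rewrite mbox_meet, Ha, Hb. reflexivity. Qed.

Lemma open_sup_M (M : MTAlg) (S : M -> Prop) : (forall a, S a -> openM a) -> openM (msup S).
Proof.
  intros H. apply mle_anti. apply mbox_defl. apply msup_least. intros a Ha.
  rewrite <- (H a Ha). apply box_mono. apply msup_ub. auto.
Qed.

Lemma open_box (M : MTAlg) (a : M) : openM (mbox a).
Proof. apply box_idem. Qed.

Lemma prox_mono (M N : MTAlg) (f : M -> N) (a b : M) : proximity f -> mle a b -> mle (f a) (f b).
Proof.
  intros [_ [P2 _]] H. assert (E : a = mmeet a b) by (apply mle_anti; [apply mmeet_glb; auto using mle_refl | apply mmeet_l]).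
  rewrite E, P2. apply mmeet_r.
Qed.

Lemma prox_bot (M N : MTAlg) (f : M -> N) : proximity f -> mle (f (mbot M)) (mbot N).
Proof.
  intros [_ [_ [P3 _]]]. specialize (P3 nil).
  change (mbot M) with (msup (fun x : M => In x nil)). rewrite P3 by (intros _ []).
  apply msup_least. intros y [x [[] _]].
Qed.


Lemma sp_ext (M : MTAlg) (a b : M) : spatial M ->
  (forall p, atom p -> (mle p a <-> mle p b)) -> a = b.
Proof.
  intros Hs H. apply Hs. fext x. pext. split; intros [Ha Hb]; split; auto; apply H; auto.
Qed.

Lemma sp_le (M : MTAlg) (a b : M) : spatial M ->
  (forall p, atom p -> mle p a -> mle p b) -> mle a b.
Proof.
  intros Hs H. assert (E : a = mmeet a b).
  { apply sp_ext; auto. intros p Hp. split; intro H1.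
    apply mmeet_glb; auto. eapply mle_trans; eauto. apply mmeet_l. }
  rewrite E. apply mmeet_r.
Qed.

Lemma atom_meet (M : MTAlg) (p a b : M) : mle p (mmeet a b) <-> mle p a /\ mle p b.
Proof. split. intro H; split; eapply mle_trans; eauto using mmeet_l, mmeet_r. intros [? ?]; apply mmeet_glb; auto. Qed.

Lemma TD_atom_lc (M : MTAlg) (p : M) : TD_alg M -> atom p -> locClosed p.
Proof.
  intros HT Hp. destruct (HT p) as [S [HS E]].
  assert (Hle : mle p (msup S)) by (rewrite <- E; apply mle_refl).
  destruct (atom_sup Hp Hle) as [s [Hs Hps]].
  assert (s = p).
  { destruct Hp as [Hnb Hp']. assert (Hsp : mle s p) by (rewrite E; apply msup_ub; auto).
    destruct (Hp' s Hsp) as [E'|E']; auto. subst s. exfalso. apply Hnb. apply mle_anti; auto using bot_le. }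
  subst. auto.
Qed.

Lemma open_lc (M : MTAlg) (u : M) : spatial M -> openM u -> locClosed u.
Proof.
  intros Hs Hu. exists u, (mtop M). rewrite Hu. apply sp_ext; auto. intros p Hp.
  rewrite atom_meet. unfold mdia. rewrite (atom_compl _ Hp). split; [intro H; split; auto|tauto].
  intro H'. apply (atom_not_bot Hp). eapply mle_trans. exact H'. eapply mle_trans. apply mbox_defl.
  apply (sp_le Hs). intros q Hq Hq'. rewrite (atom_compl _ Hq) in Hq'. exfalso. apply Hq'. apply le_top.
Qed.

Definition GOpen (M : MTAlg) (W : {p : M | atom p} -> Prop) : Prop :=
  exists u, openM u /\ forall q, W q <-> mle (proj1_sig q) u.

Lemma GOpen_full (M : MTAlg) : GOpen (fun _ : {p : M | atom p} => True).
Proof. exists (mtop M). split. apply open_top. intros q; split; auto. intros _. apply le_top. Qed.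

Lemma GOpen_meet (M : MTAlg) (U V : {p : M | atom p} -> Prop) :
  GOpen U -> GOpen V -> GOpen (fun x => U x /\ V x).
Proof.
  intros [u [Hu HU]] [v [Hv HV]]. exists (mmeet u v). split. apply open_meet_M; auto.
  intros q. rewrite atom_meet, HU, HV. tauto.
Qed.

Lemma GOpen_union (M : MTAlg) (F : ({p : M | atom p} -> Prop) -> Prop) :
  (forall U, F U -> GOpen U) -> GOpen (fun x => exists U, F U /\ U x).
Proof.
  intros HF. exists (msup (fun m => openM m /\ exists W, F W /\ forall q, W q <-> mle (proj1_sig q) m)).
  split. apply open_sup_M. intros a [Ha _]; auto.
  intros q. split.
  - intros [U [HFU HUq]]. destruct (HF U HFU) as [u [Hu HU]]. eapply mle_trans. apply HU. exact HUq.
    apply msup_ub. split; auto. exists U; auto.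
  - intros H. destruct (atom_sup (proj2_sig q) H) as [m [[Hm [W [HW HWm]]] Hqm]].
    exists W. split; auto. apply HWm; auto.
Qed.

Definition GS (M : MTAlg) : Space := {|
  pts := {p : M | atom p};
  isOpen := @GOpen M;
  open_full := @GOpen_full M;
  open_meet := @GOpen_meet M;
  open_union := @GOpen_union M |}.

Lemma pts_eq (M : MTAlg) (p q : {p : M | atom p}) : proj1_sig p = proj1_sig q -> p = q.
Proof. destruct p, q; simpl. intros ->. f_equal. apply proof_irrelevance. Qed.

Lemma GS_TD (M : MTAlg) : TD_alg M -> TD_space (GS M).
Proof.
  intros HT p. destruct (TD_atom_lc HT (proj2_sig p)) as [b [c E]].
  exists (fun q : {p : M | atom p} => mle (proj1_sig q) (mbox b)). split.
  exists (mbox b). split. apply open_box. tauto.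
  split. rewrite E at 1. apply mmeet_l.
  exists (fun q : {p : M | atom p} => mle (proj1_sig q) (mmeet (mbox b) (mbox (mneg c)))). split.
  exists (mmeet (mbox b) (mbox (mneg c))). split. apply open_meet_M; apply open_box. tauto.
  intros q Hqb. rewrite atom_meet. split.
  - intros [_ H2] Eq. subst q. assert (H3 : mle (proj1_sig p) (mdia c)) by (rewrite E at 1; apply mmeet_r).
    unfold mdia in H3. apply (atom_compl _ (proj2_sig p)) in H3. apply H3. exact H2.
  - intros Hne. split; auto. apply NNPP. intro Hn.
    apply (atom_compl _ (proj2_sig q)) in Hn. apply Hne. apply pts_eq.
    apply atom_le_eq. exact (proj2_sig q). exact (proj2_sig p). rewrite E. apply mmeet_glb; auto.
Qed.

Lemma uniq_rep (M : MTAlg) (W : {p : M | atom p} -> Prop) (u v : M) : spatial M ->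
  (forall q, W q <-> mle (proj1_sig q) u) -> (forall q, W q <-> mle (proj1_sig q) v) -> u = v.
Proof.
  intros Hs Hu Hv. apply sp_ext; auto. intros p Hp.
  rewrite <- (Hu (exist _ p Hp)), (Hv (exist _ p Hp)). tauto.
Qed.



Definition pint (X : Space) (A : X -> Prop) : X -> Prop :=
  fun x => exists U, (isOpen U /\ (forall y, U y -> A y)) /\ U x.

Lemma open_empty (X : Space) : isOpen (fun _ : X => False).
Proof.
  assert (E : (fun _ : X => False) = (fun x => exists U, (fun _ : X -> Prop => False) U /\ U x)).
  { fext x. pext. split. intros []. intros [U [[] _]]. }
  rewrite E. apply open_union. intros _ [].
Qed.

Lemma open_or (X : Space) (A B : X -> Prop) : isOpen A -> isOpen B -> isOpen (fun x => A x \/ B x).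
Proof.
  intros HA HB.
  assert (E : (fun x => A x \/ B x) = (fun x => exists U, (fun U => U = A \/ U = B) U /\ U x)).
  { fext x. pext. split. intros [H|H]; eauto. intros [U [[->| ->] H]]; auto. }
  rewrite E. apply open_union. intros U [->| ->]; auto.
Qed.

Lemma pint_open (X : Space) (A : X -> Prop) : isOpen (pint A).
Proof. apply open_union. intros U [H _]; auto. Qed.

Lemma pint_of_open (X : Space) (A : X -> Prop) : isOpen A -> pint A = A.
Proof. intros H. fext x. pext. split. intros [U [[_ HU] Hx]]; auto. intros Hx. exists A; auto. Qed.

Lemma PS_anti (X : Space) (a b : X -> Prop) : (forall x, a x -> b x) -> (forall x, b x -> a x) -> a = b.
Proof. intros. fext x. pext. split; auto. Qed.

Definition PS (X : Space) : MTAlg.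
Proof.
  refine (@Build_MTAlg (X -> Prop) (fun a b => forall x, a x -> b x) _ _ (@PS_anti X)
            (fun S x => exists A, S A /\ A x) _ _ (fun a b x => a x /\ b x) _ _ _ _
            (fun a x => ~ a x) _ _ (@pint X) _ _ _ _).
  - auto.
  - auto.
  - intros S a Ha x H; eauto.
  - intros S b H x [A [HA Hx]]. eapply H; eauto.
  - intros a b x [H _]; auto.
  - intros a b x [_ H]; auto.
  - intros a b c H1 H2 x Hx; auto.
  - intros a b c. fext x. pext. split.
    + intros [Ha [B [[->| ->] HB]]]; [exists (fun x => a x /\ b x)|exists (fun x => a x /\ c x)]; auto.
    + intros [B [[->| ->] [H1 H2]]]; split; auto; eauto.
  - intros a. fext x. pext. split. intros [H1 H2]; contradiction. intros [A [[] _]].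
  - intros a. fext x. pext. split. intros _. exists (fun _ => True); auto.
    intros _. destruct (classic (a x)); [exists a | exists (fun x => ~ a x)]; auto.
  - assert (E : (fun x : X => exists A : X -> Prop, True /\ A x) = fun _ => True).
    { fext x. pext. split; auto. intros _. exists (fun _ => True); auto. }
    rewrite E. apply pint_of_open. apply open_full.
  - intros a b. fext x. pext. split.
    + intros [U [[HU HUab] Hx]]. split; exists U; repeat split; auto; intros y Hy; apply HUab; auto.
    + intros [[U [[HU HUa] Hx]] [V [[HV HVb] Hx']]]. exists (fun y => U y /\ V y).
      repeat split; auto. apply open_meet; auto. apply HUa; tauto. apply HVb; tauto.
  - intros a x [U [[_ H] Hx]]; auto.
  - intros a x [U [[HU H] Hx]]. exists U. repeat split; auto. intros y Hy. exists U; auto.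
Defined.

Lemma PS_openM (X : Space) (a : PS X) : openM a <-> isOpen a.
Proof.
  unfold openM. split. intros E. rewrite <- E. apply pint_open. apply pint_of_open.
Qed.

Lemma PS_top (X : Space) : mtop (PS X) = fun _ => True.
Proof. unfold mtop; simpl. fext x. pext. split; auto. intros _. exists (fun _ => True); simpl; auto. Qed.

Lemma PS_lc (X : Space) (c : PS X) : locClosed c <->
  exists U V, isOpen U /\ isOpen V /\ forall y, c y <-> U y /\ ~ V y.
Proof.
  split.
  - intros [b [d ->]]. exists (pint b), (pint (fun x => ~ d x)). repeat split; try apply pint_open.
    all: simpl in *; unfold mdia in *; simpl in *; tauto.
  - intros [U [V [HU [HV H]]]]. exists U, (fun x => ~ V x).
    assert (E : c = fun y => U y /\ ~ V y) by (fext y; pext; auto).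
    rewrite E. unfold mdia. simpl. rewrite (pint_of_open HU).
    assert (E2 : (fun x => ~ ~ V x) = V) by (fext x; pext; split; [apply NNPP | auto]).
    rewrite E2, (pint_of_open HV). reflexivity.
Qed.

Definition sing (X : Space) (x : X) : PS X := fun y => y = x.

Lemma sing_atom (X : Space) (x : X) : atom (sing x).
Proof.
  split.
  - intros E. assert (H : sing x x) by reflexivity. rewrite E in H. destruct H as [A [[] _]].
  - intros y Hy. destruct (classic (y x)) as [H|H].
    + right. fext z. pext. split. apply Hy. intros ->. auto.
    + left. fext z. pext. split. intros Hz. rewrite (Hy z Hz) in Hz. contradiction. intros [A [[] _]].
Qed.

Lemma PS_atom (X : Space) (q : PS X) : atom q -> exists x, q = sing x.
Proof.
  intros [Hnb Hq]. destruct (classic (exists x, q x)) as [[x Hx]|Hn].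
  - exists x. destruct (Hq (sing x)) as [E|E].
    + intros y ->. auto.
    + exfalso. assert (H : sing x x) by reflexivity. rewrite E in H. destruct H as [A [[] _]].
    + auto.
  - exfalso. apply Hnb. fext z. pext. split. intros Hz. exfalso; eauto. intros [A [[] _]].
Qed.

Lemma PS_spatial (X : Space) : spatial (PS X).
Proof.
  intros a b E. change (@eq (X -> Prop) a b). fext x. pext.
  assert (H := equal_f E (sing x)). simpl in H.
  split; intro Hx.
  - assert (Hb : atom (sing x) /\ (forall y, sing x y -> b y)).
    { rewrite <- H. split. apply sing_atom. intros y ->; auto. }
    apply Hb. reflexivity.
  - assert (Ha : atom (sing x) /\ (forall y, sing x y -> a y)).
    { rewrite H. split. apply sing_atom. intros y ->; auto. }
    apply Ha. reflexivity.
Qed.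

Lemma sing_lc (X : Space) (x : X) : TD_space X -> @locClosed (PS X) (sing x).
Proof.
  intros HT. destruct (HT x) as [U [HU [Hx [V [HV HUV]]]]]. apply PS_lc.
  exists U, V. repeat split; auto.
  - unfold sing in H. subst. auto.
  - unfold sing in H. subst. intro HVx. apply (proj1 (HUV _ Hx) HVx). reflexivity.
  - intros [HUy HVy]. apply NNPP. intro Hne. apply HVy. apply HUV; auto.
Qed.

Lemma PS_TD (X : Space) : TD_space X -> TD_alg (PS X).
Proof.
  intros HT a. exists (fun s => @locClosed (PS X) s /\ mle s a). split. intros x [H _]; auto.
  fext x. pext. split.
  - intros Hx. exists (sing x). repeat split. apply sing_lc; auto. intros y ->; auto.
  - intros [A [[_ HA] Hx]]. auto.
Qed.


Lemma cp_open (X : Space) P U : @cpfilter X P -> P U -> isOpen U.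
Proof. intros [H _] HU; auto. Qed.
Lemma cp_full (X : Space) P : @cpfilter X P -> P (fun _ => True).
Proof. intros [_ [H _]]; auto. Qed.
Lemma cp_up (X : Space) P (U V : X -> Prop) : cpfilter P -> P U -> isOpen V -> (forall x, U x -> V x) -> P V.
Proof. intros [H1 [_ [H3 _]]] HU HV Hs. eapply H3; eauto. Qed.
Lemma cp_meet (X : Space) P (U V : X -> Prop) : cpfilter P -> P U -> P V -> P (fun x => U x /\ V x).
Proof. intros [_ [_ [_ [H _]]]]; auto. Qed.
Lemma cp_union (X : Space) P (F : (X -> Prop) -> Prop) : cpfilter P -> (forall U, F U -> isOpen U) ->
  P (fun x => exists U, F U /\ U x) -> exists U, F U /\ P U.
Proof. intros [_ [_ [_ [_ H]]]]; auto. Qed.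
Lemma cp_empty (X : Space) P : @cpfilter X P -> ~ P (fun _ => False).
Proof.
  intros HP H. assert (H' : P (fun x => exists U, (fun _ : X -> Prop => False) U /\ U x)).
  { eapply cp_up; [exact HP|exact H| |]. apply open_union. intros _ []. intros x []. }
  apply cp_union in H'; auto. destruct H' as [_ [[] _]]. intros _ [].
Qed.
Lemma cp_or (X : Space) P (A B : X -> Prop) : cpfilter P -> isOpen A -> isOpen B ->
  P (fun x => A x \/ B x) -> P A \/ P B.
Proof.
  intros HP HA HB H.
  assert (H' : P (fun x => exists U, (fun U => U = A \/ U = B) U /\ U x)).
  { eapply cp_up; eauto. apply open_union. intros U [->| ->]; auto. intros x [Hx|Hx]; eauto. }
  apply cp_union in H'; auto. destruct H' as [U [[->| ->] HU]]; auto. intros U [->| ->]; auto.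
Qed.

Definition FF (X Y : Space) (f : rawSober X Y) : PS Y -> PS X :=
  fun a x => exists U V, isOpen U /\ isOpen V /\ (forall y, U y -> ~ V y -> a y) /\ f x U /\ ~ f x V.

Lemma FF_open (X Y : Space) (f : rawSober X Y) (a : Y -> Prop) : soberMap f -> isOpen a ->
  FF f a = fun x => f x a.
Proof.
  intros [Hcp Hc] Ha. fext x. pext. split.
  - intros [U [V [HU [HV [Hs [HfU HfV]]]]]].
    assert (H : f x (fun y => a y \/ V y)).
    { eapply cp_up; eauto. apply open_or; auto. intros y Hy. destruct (classic (V y)); auto. }
    apply cp_or in H; auto. tauto.
  - intros H. exists a, (fun _ => False). repeat split; auto. apply open_empty. apply cp_empty; auto.
Qed.

Lemma FF_mono (X Y : Space) (f : rawSober X Y) (a b : Y -> Prop) : (forall y, a y -> b y) ->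
  forall x, FF f a x -> FF f b x.
Proof. intros H x [U [V [HU [HV [Hs R]]]]]. exists U, V. repeat split; try tauto. intros y H1 H2. apply H. apply Hs; auto. Qed.

Lemma FF_lc (X Y : Space) (f : rawSober X Y) (U V : Y -> Prop) x : soberMap f -> isOpen U -> isOpen V ->
  (FF f (fun y => U y /\ ~ V y) x <-> f x U /\ ~ f x V).
Proof.
  intros [Hcp Hc] HU HV. split.
  - intros [U1 [V1 [HU1 [HV1 [Hs [HfU HfV]]]]]]. split.
    + assert (H : f x (fun y => U y \/ V1 y)).
      { eapply cp_up; eauto. apply open_or; auto. intros y Hy. destruct (classic (V1 y)); auto. left. apply Hs; auto. }
      apply cp_or in H; auto. tauto.
    + intro HfV'. apply HfV. eapply cp_up. auto. apply (cp_meet (Hcp x) HfU HfV'). auto.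
      intros y [H1 H2]. apply NNPP. intro Hn. apply (Hs y H1 Hn). auto.
  - intros [H1 H2]. exists U, V. repeat split; auto.
Qed.

Lemma list_lemma (X Y : Space) (f : rawSober X Y) x (l : list (Y -> Prop)) : soberMap f ->
  (forall c, In c l -> @locClosed (PS Y) c) -> (forall c, In c l -> ~ FF f c x) ->
  exists O Wb, isOpen O /\ f x O /\ isOpen Wb /\ ~ f x Wb /\
     forall y, O y -> (exists c, In c l /\ c y) -> Wb y.
Proof.
  intros Hf. destruct Hf as [Hcp Hc]. induction l as [|c l IH]; intros Hlc Hnot.
  - exists (fun _ => True), (fun _ => False). split; [apply open_full|]. split; [apply cp_full; auto|].
    split; [apply open_empty|]. split; [apply cp_empty; auto|]. intros y _ [c [[] _]].
  - destruct IH as [O [Wb [HO [HfO [HWb [HfWb Hs]]]]]].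
    intros; apply Hlc; simpl; auto. intros; apply Hnot; simpl; auto.
    destruct (proj1 (PS_lc c) (Hlc c (or_introl eq_refl))) as [U [V [HU [HV Hcuv]]]].
    assert (Hn : ~ (f x U /\ ~ f x V)).
    { intro H. apply (Hnot c (or_introl eq_refl)).
      assert (E : c = fun y => U y /\ ~ V y) by (fext y; pext; auto). rewrite E.
      apply FF_lc; auto. split; auto. }
    destruct (classic (f x U)) as [HfU|HfU].
    + assert (HfV : f x V) by (apply NNPP; intro; apply Hn; auto).
      exists (fun y => O y /\ V y), Wb. repeat split; auto. apply open_meet; auto. apply cp_meet; auto.
      intros y [HOy HVy] [c' [[<-|Hin] Hc'y]].
      * apply Hcuv in Hc'y. tauto.
      * apply Hs; eauto.
    + exists O, (fun y => Wb y \/ U y). repeat split; auto. apply open_or; auto.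
      intro H. apply cp_or in H; auto. tauto.
      intros y HOy [c' [[<-|Hin] Hc'y]].
      * apply Hcuv in Hc'y. tauto.
      * left. apply Hs; eauto.
Qed.

Lemma FF_prox (X Y : Space) (f : rawSober X Y) : soberMap f -> @proximity (PS Y) (PS X) (FF f).
Proof.
  intros Hf. assert (Hf' := Hf). destruct Hf' as [Hcp Hc].
  assert (P2 : forall a b : PS Y, FF f (mmeet a b) = mmeet (FF f a) (FF f b)).
  { intros a b. simpl. fext x. pext. split.
    - intros H. split; [eapply (FF_mono (a:=fun y => a y /\ b y)) | eapply (FF_mono (a:=fun y => a y /\ b y))]; try exact H; simpl; tauto.
    - intros [[U1 [V1 [HU1 [HV1 [Hs1 [HfU1 HfV1]]]]]] [U2 [V2 [HU2 [HV2 [Hs2 [HfU2 HfV2]]]]]]].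
      exists (fun y => U1 y /\ U2 y), (fun y => V1 y \/ V2 y). repeat split.
      apply open_meet; auto. apply open_or; auto. apply Hs1; tauto. apply Hs2; tauto.
      apply cp_meet; auto. intro H. apply cp_or in H; auto. tauto. }
  split; [|split; [exact P2|split]].
  - split; [|split; [|split]].
    + intros a Ha. apply PS_openM in Ha. apply PS_openM. simpl. rewrite FF_open; auto.
    + rewrite !PS_top. rewrite FF_open; auto using open_full. fext x. pext. split; auto. intros _. apply cp_full; auto.
    + intros a b _ _. apply P2.
    + intros S HS. assert (HSo : isOpen (msup S : PS Y)).
      { apply open_union. intros U HU. apply PS_openM. auto. }
      simpl. rewrite FF_open; auto. fext x. pext. split.
      * intros H. apply cp_union in H; auto. destruct H as [U [HSU HfU]].
        exists (FF f U). split. eauto. rewrite FF_open; auto. apply PS_openM; auto.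
        intros U HU; apply PS_openM; auto.
      * intros [B [[a [Ha ->]] HB]]. assert (Hao : isOpen a) by (apply PS_openM; auto).
        rewrite FF_open in HB; auto. eapply cp_up; [apply Hcp|exact HB|exact HSo|].
        intros y Hy. exists a; auto.
  - intros l Hl. simpl. fext x. pext. split.
    + intros H. apply NNPP. intro Hn.
      destruct (@list_lemma X Y f x l Hf Hl) as [O [Wb [HO [HfO [HWb [HfWb Hs]]]]]].
      { intros c Hc0 Hfc. apply Hn. exists (FF f c). split; eauto. }
      destruct H as [U [V [HU [HV [HUV [HfU HfV]]]]]].
      assert (H : f x (fun y => V y \/ Wb y)).
      { eapply cp_up; [apply Hcp|apply (cp_meet (Hcp x) HfO HfU)|apply open_or; auto|].
        intros y [HOy HUy]. destruct (classic (V y)); auto. }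
      apply cp_or in H; auto. tauto.
    + intros [B [[c [Hc0 ->]] HB]]. eapply FF_mono; eauto.
  - intros a. simpl. fext x. pext. split.
    + intros H. destruct H as [U [V [HU [HV [HUV [HfU HfV]]]]]].
      exists (FF f (fun y => U y /\ ~ V y)). split.
      exists (fun y => U y /\ ~ V y). repeat split. apply PS_lc. exists U, V; repeat split; tauto.
      intros y [? ?]; auto. apply FF_lc; auto.
    + intros [B [[c [Hc0 [Hca ->]]] HB]]. eapply FF_mono; eauto.
Qed.


Definition Gh (M N : MTAlg) (h : N -> M) : rawSober (GS M) (GS N) :=
  fun p W => exists u, openM u /\ (forall q, W q <-> mle (proj1_sig q) u) /\ mle (proj1_sig p) (h u).

Lemma Gh_valid (M N : MTAlg) (h : N -> M) : spatial N -> proximity h -> soberMap (Gh h).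
Proof.
  intros HsN Hh. assert (Hh' := Hh). destruct Hh' as [[P1a [P1b [_ P1d]]] [P2 _]].
  split.
  - intros p. split; [|split; [|split; [|split]]].
    + intros U [u [Hu [HU _]]]. exists u; auto.
    + exists (mtop N). split. apply open_top. split. intros q; split; auto; intros; apply le_top.
      rewrite P1b. apply le_top.
    + intros U V _ [v [Hv HV]] [u [Hu [HU Hpu]]] Hs. exists v. split; auto. split; auto.
      eapply mle_trans. exact Hpu. apply prox_mono; auto. apply sp_le; auto.
      intros a Ha Hau. apply (HV (exist _ a Ha)). apply Hs. apply (HU (exist _ a Ha)). auto.
    + intros U V [u [Hu [HU Hpu]]] [v [Hv [HV Hpv]]]. exists (mmeet u v). split. apply open_meet_M; auto.
      split. intros q. rewrite atom_meet, HU, HV. tauto. rewrite P2. apply mmeet_glb; auto.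
    + intros F HF [u [Hu [HU Hpu]]].
      set (S := fun m => openM m /\ exists W, F W /\ forall q, W q <-> mle (proj1_sig q) m).
      assert (E : u = msup S).
      { apply sp_ext; auto. intros a Ha. rewrite <- (HU (exist _ a Ha)). split.
        - intros [W [HW HWa]]. destruct (HF W HW) as [m [Hm HWm]]. eapply mle_trans.
          apply (HWm (exist _ a Ha)). auto. apply msup_ub. split; auto. exists W; auto.
        - intros H. destruct (atom_sup Ha H) as [m [[Hm [W [HW HWm]]] Ham]].
          exists W. split; auto. apply (HWm (exist _ a Ha)). auto. }
      rewrite E, P1d in Hpu by (intros a [Ha _]; auto).
      destruct (atom_sup (proj2_sig p) Hpu) as [y [[m [[Hm [W [HW HWm]]] ->]] Hpm]].
      exists W. split; auto. exists m; auto.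
  - intros V [v [Hv HV]]. exists (h v). split. apply P1a; auto. intros p. split.
    + intros [u [Hu [HU Hpu]]]. rewrite (uniq_rep HsN HU HV) in Hpu. auto.
    + intros H. exists v; auto.
Qed.

Lemma F_id_lemma (X : Space) : FF (@lambdaS X) = @proxId (PS X).
Proof.
  fext a. fext x. unfold FF, proxId, lambdaS. simpl. pext. split.
  - intros [U [V [HU [HV [HUV [[_ HUx] HVx]]]]]]. exists (fun y => U y /\ ~ V y). split.
    split. apply PS_lc. exists U, V. repeat split; tauto. intros y [? ?]; auto. split; tauto.
  - intros [c [[Hc Hca] Hcx]]. destruct (proj1 (PS_lc c) Hc) as [U [V [HU [HV Hcuv]]]].
    exists U, V. repeat split; auto. intros y H1 H2. apply Hca. apply Hcuv; auto.
    apply Hcuv; auto. intros [_ H]. apply Hcuv in Hcx. tauto.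
Qed.

Lemma F_comp_lemma (X Y Z : Space) (f : rawSober X Y) (g : rawSober Y Z) :
  soberMap f -> soberMap g -> FF (soberComp g f) = @proxComp (PS Z) (PS Y) (PS X) (FF f) (FF g).
Proof.
  intros Hf Hg. assert (Hf' := Hf); assert (Hg' := Hg). destruct Hf' as [Hfc Hfo]. destruct Hg' as [Hgc Hgo].
  fext a. fext x. unfold proxComp, soberComp. simpl. pext. split.
  - intros [U [V [HU [HV [HUV [HfU HfV]]]]]].
    exists (FF f (FF g (fun y => U y /\ ~ V y))). split.
    + exists (fun y => U y /\ ~ V y). split. apply PS_lc. exists U, V. repeat split; tauto.
      split. intros y [? ?]; auto. reflexivity.
    + exists (fun y => g y U), (fun y => g y V). repeat split; auto.
      intros y H1 H2. apply FF_lc; auto.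
  - intros [B [[c [Hc [Hca ->]]] HB]]. destruct (proj1 (PS_lc c) Hc) as [U [V [HU [HV Hcuv]]]].
    assert (Ec : c = fun y => U y /\ ~ V y) by (fext y; pext; auto). subst c.
    destruct HB as [U' [V' [HU' [HV' [HUV' [HfU' HfV']]]]]].
    exists U, V. repeat split; auto.
    + assert (H : f x (fun y => V' y \/ g y U)).
      { eapply cp_up; [apply Hfc|exact HfU'|apply open_or; auto|].
        intros y Hy. destruct (classic (V' y)); auto. right. apply HUV' in Hy; auto.
        apply (FF_lc _ Hg HU HV) in Hy. tauto. }
      apply cp_or in H; auto. tauto.
    + intro HfgV. apply HfV'. eapply cp_up; [apply Hfc|apply (cp_meet (Hfc x) HfU' HfgV)|auto|].
      intros y [H1 H2]. apply NNPP. intro Hn. specialize (HUV' y H1 Hn).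
      apply (FF_lc _ Hg HU HV) in HUV'. tauto.
Qed.

Lemma proxId_open (M : MTAlg) (u : M) : spatial M -> openM u -> proxId u = u.
Proof.
  intros Hs Hu. apply mle_anti. apply msup_least. intros a [_ H]; auto.
  apply msup_ub. split. apply open_lc; auto. apply mle_refl.
Qed.

Lemma proxComp_open (M1 M2 M3 : MTAlg) (g : M2 -> M3) (f : M1 -> M2) (u : M1) :
  spatial M1 -> proximity f -> proximity g -> openM u -> proxComp g f u = g (f u).
Proof.
  intros Hs Hf Hg Hu. apply mle_anti.
  - apply msup_least. intros z [x [_ [Hx ->]]]. apply prox_mono; auto. apply prox_mono; auto.
  - apply msup_ub. exists u. split. apply open_lc; auto. split; auto. apply mle_refl.
Qed.

Lemma G_id_lemma (M : MTAlg) : spatial M -> Gh (@proxId M) = @lambdaS (GS M).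
Proof.
  intros Hs. fext p. fext W. unfold Gh, lambdaS. simpl. pext. split.
  - intros [u [Hu [HW Hp]]]. rewrite proxId_open in Hp; auto. split. exists u; auto. apply HW; auto.
  - intros [[u [Hu HW]] HWp]. exists u. split; auto. split; auto. rewrite proxId_open; auto. apply HW; auto.
Qed.

Lemma G_comp_lemma (A B C : MTAlg) (f : B -> A) (g : C -> B) :
  spatial B -> spatial C -> proximity f -> proximity g ->
  Gh (proxComp f g) = soberComp (Gh g) (Gh f).
Proof.
  intros HsB HsC Hf Hg. fext p. fext W. unfold Gh, soberComp. pext. split.
  - intros [u [Hu [HW Hp]]]. rewrite proxComp_open in Hp; auto.
    exists (g u). split. apply Hg; auto. split; auto. intros q. split.
    + intros [u' [Hu' [HW' Hq]]]. rewrite (uniq_rep HsC HW' HW) in Hq. auto.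
    + intros Hq. exists u; auto.
  - intros [v [Hv [Hq Hp]]].
    destruct (classic (exists u, openM u /\ forall q, W q <-> mle (proj1_sig q) u)) as [[u [Hu HW]]|Hn].
    + exists u. split; auto. split; auto. rewrite proxComp_open; auto.
      assert (E : v = g u).
      { apply sp_ext; auto. intros a Ha. rewrite <- (Hq (exist _ a Ha)). split.
        - intros [u' [Hu' [HW' Ha']]]. rewrite (uniq_rep HsC HW' HW) in Ha'. auto.
        - intros H. exists u; auto. }
      subst v. auto.
    + exfalso. assert (E : v = mbot B).
      { apply sp_ext; auto. intros a Ha. rewrite <- (Hq (exist _ a Ha)). split.
        - intros [u' [Hu' [HW' _]]]. exfalso; eauto.
        - intros H. exfalso. apply (atom_not_bot Ha H). }
      subst v. apply (atom_not_bot (proj2_sig p)). eapply mle_trans. exact Hp. apply prox_bot; auto.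
Qed.


Definition al1 (X : Space) : rawSober (GS (PS X)) X :=
  fun q U => isOpen U /\ forall x, (proj1_sig q : X -> Prop) x -> U x.
Definition spt (X : Space) (x : X) : GS (PS X) := exist _ (sing x) (sing_atom x).
Definition be1 (X : Space) : rawSober X (GS (PS X)) :=
  fun x W => isOpen W /\ W (spt x).

Arguments al1 : clear implicits.
Arguments be1 : clear implicits.
Lemma pts_sing (X : Space) (q : GS (PS X)) : exists x, q = spt x.
Proof.
  destruct (PS_atom (proj2_sig q)) as [x E]. exists x. apply pts_eq. exact E.
Qed.

Lemma al1_valid (X : Space) : soberMap (al1 X).
Proof.
  split.
  - intros q. destruct (pts_sing q) as [x0 ->]. unfold al1. simpl.
    split; [|split; [|split; [|split]]].
    + intros U [H _]; auto.
    + split; auto. apply open_full.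
    + intros U V _ HV [HU H] Hs. split; auto.
    + intros U V [HU H1] [HV H2]. split. apply open_meet; auto. auto.
    + intros F HF [HU H]. destruct (H x0 eq_refl) as [U [HFU HUx]]. exists U. split; auto.
      split; auto. unfold sing; intros x ->; auto.
  - intros U HU. assert (E : (fun q : GS (PS X) => al1 X q U) = fun q => mle (proj1_sig q) U).
    { fext q. unfold al1. pext. split. intros [_ H]; exact H. intros H; split; auto. }
    rewrite E. exists U. split. apply PS_openM; auto. tauto.
Qed.

Lemma GS_PS_open_pre (X : Space) (W : GS (PS X) -> Prop) : isOpen W ->
  isOpen (fun x => W (spt x)).
Proof.
  intros [u [Hu HW]]. assert (E : (fun x => W (spt x)) = u).
  { fext x. pext. rewrite HW. simpl. split. intro H; apply H; reflexivity. intros H y ->; auto. }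
  rewrite E. apply PS_openM; auto.
Qed.

Lemma be1_valid (X : Space) : soberMap (be1 X).
Proof.
  split.
  - intros x. unfold be1. split; [|split; [|split; [|split]]].
    + intros U [H _]; auto.
    + split; auto. apply (open_full (GS (PS X))).
    + intros U V _ HV [HU H] Hs. split; auto.
    + intros U V [HU H1] [HV H2]. split. apply (open_meet (s := GS (PS X))); auto. auto.
    + intros F HF [HU [U [HFU HUx]]]. exists U. split; auto.
  - intros W HW. assert (E : (fun x => be1 X x W) = fun x => W (spt x)).
    { fext x. unfold be1. pext. tauto. }
    rewrite E. apply GS_PS_open_pre; auto.
Qed.

Lemma iso1_a (X : Space) : soberComp (be1 X) (al1 X) = @lambdaS (GS (PS X)).
Proof.
  fext q. fext W. unfold soberComp, al1, be1, lambdaS. destruct (pts_sing q) as [x0 ->]. simpl.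
  pext. split.
  - intros [_ H]. destruct (H x0 eq_refl) as [HW HWx]. auto.
  - intros [HW HWx]. split.
    + assert (E : (fun x => GOpen W /\ W (spt x)) = fun x => W (spt x)) by (fext x; pext; tauto).
      rewrite E. apply GS_PS_open_pre; auto.
    + unfold sing. intros x ->. auto.
Qed.

Lemma iso1_b (X : Space) : soberComp (al1 X) (be1 X) = @lambdaS X.
Proof.
  fext x. fext U. unfold soberComp, al1, be1, lambdaS. simpl. pext. split.
  - intros [_ [HU H]]. split; auto. apply H. reflexivity.
  - intros [HU HUx]. split.
    + exists U. split. apply PS_openM; auto. intros q. simpl. tauto.
    + split; auto. unfold sing. intros y ->; auto.
Qed.

Lemma nat1 (X Y : Space) (f : rawSober X Y) : soberMap f ->
  soberComp f (al1 X) = soberComp (al1 Y) (Gh (FF f)).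
Proof.
  intros Hf. assert (Hf' := Hf). destruct Hf' as [Hcp Hc].
  fext q. fext U. destruct (pts_sing q) as [x0 ->]. unfold soberComp, al1, Gh. simpl. pext. split.
  - intros [_ H]. assert (HfU : f x0 U) by (apply H; reflexivity).
    assert (HU : isOpen U) by (eapply cp_open; eauto).
    exists U. split. apply PS_openM; auto. split. intros q'; simpl; tauto.
    unfold sing. intros x ->. rewrite FF_open; auto.
  - intros [u [Hu [Hq Hx0]]]. destruct (classic (isOpen U)) as [HU|HU].
    + assert (E : u = U).
      { fext y. pext. split.
        - intro Hy. apply (proj2 (Hq (spt y))). simpl. unfold sing. intros z ->; auto. reflexivity.
        - intro Hy. apply (proj1 (Hq (spt y))). split; auto. unfold sing; intros z ->; auto. reflexivity. }
      subst u. split. apply Hc; auto. intros x Hx. specialize (Hx0 x Hx).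
      rewrite FF_open in Hx0; auto.
    + exfalso. specialize (Hx0 x0 eq_refl). destruct Hx0 as [U1 [V1 [HU1 [HV1 [HUV [HfU HfV]]]]]].
      apply HfV. eapply cp_up; [apply Hcp|exact HfU|exact HV1|].
      intros y Hy. apply NNPP. intro Hn. specialize (HUV y Hy Hn).
      destruct (proj2 (Hq (spt y))) as [HUo _]. simpl. unfold sing. intros z ->. auto. contradiction.
Qed.


Definition al2 (M : MTAlg) : M -> PS (GS M) := fun a q => mle (proj1_sig q) a.
Definition be2 (M : MTAlg) : PS (GS M) -> M :=
  fun A => msup (fun m => exists q, A q /\ m = proj1_sig q).
Arguments al2 : clear implicits.
Arguments be2 : clear implicits.

Lemma be2_key (M : MTAlg) (A : PS (GS M)) (q : GS M) : mle (proj1_sig q) (be2 M A) <-> A q.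
Proof.
  split.
  - intros H. destruct (atom_sup (proj2_sig q) H) as [m [[q' [Hq' ->]] Hle]].
    assert (E : q = q') by (apply pts_eq; apply atom_le_eq; auto; [exact (proj2_sig q)|exact (proj2_sig q')]).
    subst; auto.
  - intros H. apply msup_ub. eauto.
Qed.

Lemma be2_al2 (M : MTAlg) (a : M) : spatial M -> be2 M (al2 M a) = a.
Proof.
  intros Hs. apply sp_ext; auto. intros p Hp. apply (be2_key (al2 M a) (exist _ p Hp)).
Qed.

Lemma al2_prox (M : MTAlg) : spatial M -> TD_alg M -> @proximity M (PS (GS M)) (al2 M).
Proof.
  intros Hs HT.
  assert (J : forall S : M -> Prop, al2 M (msup S) = msup (fun y => exists a, S a /\ y = al2 M a)).
  { intros S. simpl. fext q. unfold al2. pext. split.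
    - intros H. destruct (atom_sup (proj2_sig q) H) as [s [Hs' Hqs]]. exists (al2 M s). split; eauto.
    - intros [B [[a [Ha ->]] HB]]. eapply mle_trans. exact HB. apply msup_ub; auto. }
  split; [split; [|split; [|split]]|split; [|split]].
  - intros a Ha. apply PS_openM. exists a. split; auto. unfold al2; tauto.
  - rewrite PS_top. fext q. unfold al2. pext. split; auto. intros _. apply le_top.
  - intros a b _ _. simpl. fext q. unfold al2. pext. apply atom_meet.
  - intros S _. apply J.
  - intros a b. simpl. fext q. unfold al2. pext. apply atom_meet.
  - intros l _. apply J.
  - intros a. simpl. fext q. unfold al2. pext. split.
    + intros H. exists (al2 M (proj1_sig q)). split. exists (proj1_sig q). split.
      apply TD_atom_lc; auto. exact (proj2_sig q). auto. unfold al2. apply mle_refl.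
    + intros [B [[x [_ [Hx ->]]] HB]]. eapply mle_trans; eauto.
Qed.

Lemma be2_prox (M : MTAlg) : spatial M -> TD_alg M -> @proximity (PS (GS M)) M (be2 M).
Proof.
  intros Hs HT.
  assert (J : forall S : PS (GS M) -> Prop, be2 M (msup S) = msup (fun y => exists a, S a /\ y = be2 M a)).
  { intros S. apply sp_ext; auto. intros p Hp. rewrite (be2_key _ (exist _ p Hp)). split.
    - intros [B [HSB HB]]. eapply mle_trans; [|apply msup_ub; exists B; split; eauto].
      apply (be2_key B (exist _ p Hp)). auto.
    - intros H. destruct (atom_sup Hp H) as [m [[a [Ha ->]] Hpa]]. exists a. split; auto.
      apply (be2_key a (exist _ p Hp)). auto. }
  assert (P2 : forall a b : PS (GS M), be2 M (mmeet a b) = mmeet (be2 M a) (be2 M b)).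
  { intros a b. apply sp_ext; auto. intros p Hp. rewrite atom_meet.
    rewrite !(be2_key _ (exist _ p Hp)). simpl. tauto. }
  split; [split; [|split; [|split]]|split; [|split]].
  - intros A HA. apply PS_openM in HA. destruct HA as [u [Hu HA]].
    assert (E : be2 M A = u).
    { apply sp_ext; auto. intros p Hp. rewrite (be2_key _ (exist _ p Hp)). apply (HA (exist _ p Hp)). }
    rewrite E; auto.
  - apply sp_ext; auto. intros p Hp. rewrite (be2_key _ (exist _ p Hp)). rewrite PS_top.
    split; auto. intros _. apply le_top.
  - intros a b _ _. apply P2.
  - intros S _. apply J.
  - apply P2.
  - intros l _. apply J.
  - intros A. apply sp_ext; auto. intros p Hp. rewrite (be2_key _ (exist _ p Hp)). split.
    + intros H. eapply mle_trans; [|apply msup_ub].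
      apply (be2_key (@sing (GS M) (exist _ p Hp)) (exist _ p Hp)). reflexivity.
      exists (@sing (GS M) (exist _ p Hp)). split. apply sing_lc. apply GS_TD; auto.
      split; auto. unfold sing. simpl. intros x ->. auto.
    + intros H. destruct (atom_sup Hp H) as [m [[x [Hx [HxA ->]]] Hpx]].
      apply HxA. apply (be2_key x (exist _ p Hp)). auto.
Qed.

Lemma iso2_a (M : MTAlg) : spatial M -> TD_alg M ->
  proxComp (al2 M) (be2 M) = @proxId (PS (GS M)).
Proof.
  intros Hs HT. fext A. fext q. unfold proxComp, proxId. simpl. pext. split.
  - intros [B [[x [Hx [HxA ->]]] HB]]. exists x. split. split; auto. apply (be2_key x q). auto.
  - intros [c [[Hc HcA] Hcq]]. exists (al2 M (be2 M c)). split. exists c; auto.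
    apply (be2_key c q). auto.
Qed.

Lemma iso2_b (M : MTAlg) : spatial M -> proxComp (be2 M) (al2 M) = @proxId M.
Proof.
  intros Hs. fext a. unfold proxComp, proxId. f_equal. fext z. pext. split.
  - intros [x [Hx [Hxa ->]]]. rewrite be2_al2; auto.
  - intros [Hz Hza]. exists z. rewrite be2_al2; auto.
Qed.

Lemma nat2 (M N : MTAlg) (h : N -> M) : spatial M -> spatial N -> TD_alg N -> proximity h ->
  proxComp (al2 M) h = proxComp (FF (Gh h)) (al2 N).
Proof.
  intros HsM HsN HTN Hh. assert (Hh' := Hh). destruct Hh' as [[P1a [P1b [_ P1d]]] [P2 [P3 P4]]].
  assert (HGv : soberMap (Gh h)) by (apply Gh_valid; auto).
  fext b. fext p. unfold proxComp. simpl. pext. split.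
  - intros [B [[x [Hx [Hxb ->]]] HB]]. unfold al2 in HB.
    exists (FF (Gh h) (al2 N x)). split. exists x; auto.
    destruct Hx as [c [d Ex]].
    exists (fun q : GS N => mle (proj1_sig q) (mbox c)), (fun q : GS N => mle (proj1_sig q) (mbox (mneg d))).
    split. exists (mbox c). split. apply open_box. tauto.
    split. exists (mbox (mneg d)). split. apply open_box. tauto.
    split. intros q H1 H2. unfold al2. rewrite Ex. apply mmeet_glb; auto. unfold mdia.
    apply (atom_compl _ (proj2_sig q)). auto.
    split. exists (mbox c). split. apply open_box. split. tauto.
    eapply mle_trans. exact HB. apply prox_mono; auto. rewrite Ex. apply mmeet_l.
    intros [v [Hv [HV Hpv]]].
    assert (Ev : v = mbox (mneg d)).
    { apply (@uniq_rep N (fun q => mle (proj1_sig q) (mbox (mneg d)))); [exact HsN|exact HV|]. intros q; tauto. }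
    subst v. apply (atom_not_bot (proj2_sig p)). eapply mle_trans; [|apply (prox_bot Hh)].
    assert (E0 : mmeet x (mbox (mneg d)) = mbot N).
    { apply sp_ext; auto. intros q Hq. rewrite atom_meet. split.
      - intros [H1 H2]. exfalso. rewrite Ex in H1. apply atom_meet in H1. destruct H1 as [_ H1].
        unfold mdia in H1. apply (atom_compl _ Hq) in H1. auto.
      - intros H. exfalso. apply (atom_not_bot Hq H). }
    rewrite <- E0, P2. apply mmeet_glb; auto.
  - intros [B [[x [Hx [Hxb ->]]] HB]].
    destruct HB as [U [V [[u [Hu HU]] [[v [Hv HV]] [HUV [HGU HGV]]]]]].
    assert (Hpu : mle (proj1_sig p) (h u)).
    { destruct HGU as [u' [Hu' [HU' Hp]]]. rewrite (uniq_rep HsN HU' HU) in Hp. auto. }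
    assert (Hpv : ~ mle (proj1_sig p) (h v)).
    { intro H. apply HGV. exists v. auto. }
    set (y := mmeet u (mneg v)).
    assert (Hyx : mle y x).
    { apply sp_le; auto. intros q Hq Hqy. unfold y in Hqy. apply atom_meet in Hqy. destruct Hqy as [H1 H2].
      apply (HUV (exist _ q Hq)). apply HU; auto. intro H. apply HV in H. apply (atom_compl _ Hq) in H2. auto. }
    assert (Hylc : locClosed y).
    { exists u, (mneg v). rewrite Hu. unfold mdia. f_equal.
      assert (E : mneg (mneg v) = v).
      { apply sp_ext; auto. intros q Hq. rewrite !(atom_compl _ Hq). tauto. }
      rewrite E, Hv. reflexivity. }
    assert (Huv : locClosed (mmeet u v)) by (apply open_lc; auto; apply open_meet_M; auto).
    assert (Eu : u = msup (fun z => In z (y :: mmeet u v :: nil))).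
    { apply sp_ext; auto. intros q Hq. split.
      - intros H. destruct (classic (mle q v)) as [H'|H'].
        + apply (mle_trans (b := mmeet u v)); [|apply msup_ub; simpl; auto]. apply atom_meet; auto.
        + apply (mle_trans (b := y)); [|apply msup_ub; simpl; auto]. unfold y. apply atom_meet. split; auto.
          apply (proj2 (atom_compl v Hq)). auto.
      - intros H. destruct (atom_sup Hq H) as [z [Hz Hqz]]. simpl in Hz.
        destruct Hz as [<-|[<-|[]]]; eapply mle_trans; eauto; apply mmeet_l. }
    rewrite Eu, P3 in Hpu.
    2:{ intros z [<-|[<-|[]]]; auto. }
    destruct (atom_sup (proj2_sig p) Hpu) as [w [[z [Hz ->]] Hpz]]. simpl in Hz.
    destruct Hz as [<-|[<-|[]]].
    + exists (al2 M (h y)). split. exists y. split; auto. split; auto. eapply mle_trans; eauto.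
      exact Hpz.
    + exfalso. apply Hpv. eapply mle_trans. exact Hpz. apply prox_mono; auto. apply mmeet_r.
Qed.


Definition FoF (X : Ob TDTopS) : Ob (opCat STDMTP) :=
  exist _ (PS (proj1_sig X)) (conj (@PS_spatial (proj1_sig X)) (PS_TD (proj2_sig X))).
Definition FhF (a b : Ob TDTopS) (f : Hm TDTopS a b) : Hm (opCat STDMTP) (FoF a) (FoF b) :=
  @FF (proj1_sig a) (proj1_sig b) f.
Definition FunF : Functor TDTopS (opCat STDMTP).
Proof.
  refine {| Fo := FoF; Fh := FhF |}.
  - intros a b f Hf. simpl. apply FF_prox. exact Hf.
  - intros a. simpl. apply F_id_lemma.
  - intros a b c f g Hf Hg. simpl. apply F_comp_lemma; auto.
Defined.

Definition FoG (M : Ob (opCat STDMTP)) : Ob TDTopS :=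
  exist _ (GS (proj1_sig M)) (GS_TD (proj2 (proj2_sig M))).
Definition FhG (a b : Ob (opCat STDMTP)) (f : Hm (opCat STDMTP) a b) : Hm TDTopS (FoG a) (FoG b) :=
  @Gh (proj1_sig a) (proj1_sig b) f.
Definition FunG : Functor (opCat STDMTP) TDTopS.
Proof.
  refine {| Fo := FoG; Fh := FhG |}.
  - intros a b f Hf. simpl. apply Gh_valid. exact (proj1 (proj2_sig b)). exact Hf.
  - intros a. simpl. apply G_id_lemma. exact (proj1 (proj2_sig a)).
  - intros a b c f g Hf Hg. simpl. apply G_comp_lemma; auto.
    exact (proj1 (proj2_sig b)). exact (proj1 (proj2_sig c)).
Defined.

Theorem corollary6p17 : CatEquivalent TDTopS (opCat STDMTP).
Proof.
  exists FunF, FunG. split.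
  - exists (fun a => al1 (proj1_sig a)), (fun a => be1 (proj1_sig a)). split.
    + intros a. simpl. split; [apply al1_valid|]. split; [apply be1_valid|].
      split; [apply iso1_a|apply iso1_b].
    + intros a b f Hf. simpl. unfold FhG, FhF. simpl. apply nat1. exact Hf.
  - exists (fun a => al2 (proj1_sig a)), (fun a => be2 (proj1_sig a)). split.
    + intros a. destruct (proj2_sig a) as [Hs HT]. simpl. split; [apply al2_prox; auto|].
      split; [apply be2_prox; auto|]. split; [apply iso2_a; auto|apply iso2_b; auto].
    + intros a b f Hf. simpl. unfold FhG, FhF. simpl. apply nat2; auto.
      exact (proj1 (proj2_sig a)). exact (proj1 (proj2_sig b)). exact (proj2 (proj2_sig b)).
Qed.
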